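(* For every $g\in\mathrm{Sp}(2,1)$, the set of traces of the elements of $g\,\mathrm{SU}(2,1)\,g^{-1}$ is not contained in $\mathbb R$.
   Context: $\mathbb H$ denotes the quaternions. $\mathrm{Sp}(2,1)=\{A\in\mathrm{GL}(3,\mathbb H): A^*I_{2,1}A=I_{2,1}\}$ with $A^*$ the conjugate transpose and $I_{2,1}=\mathrm{diag}(1,1,-1)$. $\mathrm{SU}(2,1)\subset\mathrm{Sp}(2,1)$ is the subgroup of complex matrices of determinant $1$ preserving $I_{2,1}$. The trace of a quaternionic matrix is the sum of its diagonal entries. *)

(* Defs.v *)
From HB Require Import structures.
From mathcomp Require Import all_boot all_order all_algebra.
From mathcomp Require Import complex.
From mathcomp Require Import reals.
Set Implicit Arguments. Unset Strict Implicit. Unset Printing Implicit Defensive.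
Import Order.TTheory GRing.Theory Num.Theory.
Local Open Scope ring_scope.

Record quat (R : Type) := Quat { qre : R; qi : R; qj : R; qk : R }.

Section Quat.
Variable R : realType.

Definition qzero : quat R := Quat 0 0 0 0.
Definition qone : quat R := Quat 1 0 0 0.
Definition qadd (p q : quat R) : quat R :=
  Quat (qre p + qre q) (qi p + qi q) (qj p + qj q) (qk p + qk q).
(* Hamilton product, i^2 = j^2 = k^2 = ijk = -1 *)
Definition qmul (p q : quat R) : quat R :=
  Quat (qre p * qre q - qi p * qi q - qj p * qj q - qk p * qk q)
       (qre p * qi q + qi p * qre q + qj p * qk q - qk p * qj q)
       (qre p * qj q - qi p * qk q + qj p * qre q + qk p * qi q)
       (qre p * qk q + qi p * qj q - qj p * qi q + qk p * qre q).
Definition qconj (p : quat R) : quat R := Quat (qre p) (- qi p) (- qj p) (- qk p).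
Definition qreal (p : quat R) : Prop := qi p = 0 /\ qj p = 0 /\ qk p = 0.
Definition quat_of_complex (z : R[i]) : quat R := Quat (complex.Re z) (complex.Im z) 0 0.

Definition qmat := 'I_3 -> 'I_3 -> quat R.

Definition qmx_eq (A B : qmat) : Prop := forall i j, A i j = B i j.
Definition qmxmul (A B : qmat) : qmat := fun i j =>
  foldr (fun k acc => qadd (qmul (A i k) (B k j)) acc) qzero (enum 'I_3).
Definition qmx1 : qmat := fun i j => if i == j then qone else qzero.
Definition qmx_adj (A : qmat) : qmat := fun i j => qconj (A j i).
Definition qI21 : qmat := fun i j =>
  if i == j then (if val i == 2%N then Quat (-1) 0 0 0 else qone) else qzero.
Definition qtrace (A : qmat) : quat R :=
  foldr (fun k acc => qadd (A k k) acc) qzero (enum 'I_3).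

Definition qGL3 (A : qmat) : Prop :=
  exists B : qmat, qmx_eq (qmxmul A B) qmx1 /\ qmx_eq (qmxmul B A) qmx1.

Definition Sp21 (A : qmat) : Prop :=
  qGL3 A /\ qmx_eq (qmxmul (qmx_adj A) (qmxmul qI21 A)) qI21.

Definition cI21 : 'M[R[i]]_3 := diag_mx (\row_(k < 3) (if val k == 2%N then -1 else 1)).

Definition SU21 (M : 'M[R[i]]_3) : Prop :=
  \det M = 1 /\ (map_mx (@conjc R) M)^T *m cI21 *m M = cI21.

Definition qmat_of_cmx (M : 'M[R[i]]_3) : qmat := fun i j => quat_of_complex (M i j).

Definition SU21_in_Sp21 (A : qmat) : Prop :=
  exists M : 'M[R[i]]_3, SU21 M /\ qmx_eq A (qmat_of_cmx M).

Definition qconj_set (g : qmat) (H : qmat -> Prop) (A : qmat) : Prop :=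
  exists h ginv, H h /\ qmx_eq (qmxmul g ginv) qmx1 /\ qmx_eq (qmxmul ginv g) qmx1
                 /\ qmx_eq A (qmxmul g (qmxmul h ginv)).

End Quat.

(* Main.v *)
Require Import Defs.
From HB Require Import structures.
From mathcomp Require Import all_boot all_order all_algebra.
From mathcomp Require Import complex reals.
From mathcomp Require Import ring lra.
Set Implicit Arguments. Unset Strict Implicit. Unset Printing Implicit Defensive.
Import Order.TTheory GRing.Theory Num.Theory.
Local Open Scope ring_scope.
Lemma det3 (R : comNzRingType) (f : nat -> nat -> R) :
  \det (\matrix_(i < 3, j < 3) f i j) =
  f 0%N 0%N * (f 1%N 1%N * f 2%N 2%N - f 1%N 2%N * f 2%N 1%N)
  - f 0%N 1%N * (f 1%N 0%N * f 2%N 2%N - f 1%N 2%N * f 2%N 0%N)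
  + f 0%N 2%N * (f 1%N 0%N * f 2%N 1%N - f 1%N 1%N * f 2%N 0%N).
Proof.
rewrite (expand_det_row _ 0) !big_ord_recr big_ord0 /= add0r.
rewrite /cofactor !(expand_det_row _ 0) !big_ord_recr !big_ord0 /= !add0r.
rewrite /cofactor !det_mx11 !mxE /=.
ring.
Qed.

Section C.
Variable R : realType.
Local Notation C := (R[i]).

Lemma ceqP (x y : C) : complex.Re x = complex.Re y -> complex.Im x = complex.Im y -> x = y.
Proof. by case: x y => a b [c d] /= -> ->. Qed.
Lemma ReD (x y : C) : complex.Re (x + y) = complex.Re x + complex.Re y. Proof. by case: x y => a b [c d]. Qed.
Lemma ImD (x y : C) : complex.Im (x + y) = complex.Im x + complex.Im y. Proof. by case: x y => a b [c d]. Qed.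
Lemma ReN (x : C) : complex.Re (- x) = - complex.Re x. Proof. by case: x. Qed.
Lemma ImN (x : C) : complex.Im (- x) = - complex.Im x. Proof. by case: x. Qed.
Lemma ReM (x y : C) : complex.Re (x * y) = complex.Re x * complex.Re y - complex.Im x * complex.Im y. Proof. by case: x y => a b [c d]. Qed.
Lemma ImM (x y : C) : complex.Im (x * y) = complex.Re x * complex.Im y + complex.Im x * complex.Re y. Proof. by case: x y => a b [c d]. Qed.
Lemma Re1 : complex.Re (1 : C) = 1. Proof. by []. Qed.
Lemma Im1 : complex.Im (1 : C) = 0. Proof. by []. Qed.
Lemma Re0 : complex.Re (0 : C) = 0. Proof. by []. Qed.
Lemma Im0 : complex.Im (0 : C) = 0. Proof. by []. Qed.
Lemma ReC (x : C) : complex.Re (x^*)%C = complex.Re x. Proof. by case: x. Qed.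
Lemma ImC (x : C) : complex.Im (x^*)%C = - complex.Im x. Proof. by case: x. Qed.
Lemma ReB (x y : C) : complex.Re (x - y) = complex.Re x - complex.Re y. Proof. by case: x y => a b [c d]. Qed.
Lemma ImB (x y : C) : complex.Im (x - y) = complex.Im x - complex.Im y. Proof. by case: x y => a b [c d]. Qed.
Ltac cE := rewrite ?(ReB, ImB, ReD, ImD, ReN, ImN, ReM, ImM, Re1, Im1, Re0, Im0, ReC, ImC).

Definition eps (k : nat) : C := if k == 2%N then -1 else 1.

Lemma SU21f (f : nat -> nat -> C) :
  f 0%N 0%N * (f 1%N 1%N * f 2%N 2%N - f 1%N 2%N * f 2%N 1%N)
  - f 0%N 1%N * (f 1%N 0%N * f 2%N 2%N - f 1%N 2%N * f 2%N 0%N)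
  + f 0%N 2%N * (f 1%N 0%N * f 2%N 1%N - f 1%N 1%N * f 2%N 0%N) = 1 ->
  (forall i j, (i < 3)%N -> (j < 3)%N ->
    conjc (f 0%N i) * f 0%N j + conjc (f 1%N i) * f 1%N j - conjc (f 2%N i) * f 2%N j
    = if i == j then eps i else 0) ->
  SU21 (\matrix_(i < 3, j < 3) f i j).
Proof.
move=> hd hf; split; first by rewrite det3.
apply/matrixP => i j.
rewrite !mxE !big_ord_recr big_ord0 /= add0r.
rewrite !mxE !big_ord_recr !big_ord0 /= !add0r !mxE /= !mulr0n !mulr1n.
have h := hf i j (ltn_ord i) (ltn_ord j).
apply: (etrans _ (etrans h _)).
  by rewrite !mulr1 !mulr0 !addr0 !add0r mulrN1 mulNr.
have -> : (i == j) = (nat_of_ord i == nat_of_ord j) by [].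
by rewrite /eps; case: (nat_of_ord i == nat_of_ord j).
Qed.


Definition mkf (a00 a01 a02 a10 a11 a12 a20 a21 a22 : C) (i j : nat) : C :=
  match i, j with
  | 0%N, 0%N => a00 | 0%N, 1%N => a01 | 0%N, 2%N => a02
  | 1%N, 0%N => a10 | 1%N, 1%N => a11 | 1%N, 2%N => a12
  | 2%N, 0%N => a20 | 2%N, 1%N => a21 | 2%N, 2%N => a22
  | _, _ => 0 end.
Definition fR1 := mkf (Complex (0) (0)) (Complex (-1) (0)) (Complex (0) (0)) (Complex (1) (0)) (Complex (0) (0)) (Complex (0) (0)) (Complex (0) (0)) (Complex (0) (0)) (Complex (1) (0)).
Lemma SU_R1 : SU21 (\matrix_(i < 3, j < 3) fR1 i j).
Proof.
apply: SU21f.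
  by rewrite /fR1 /mkf; apply: ceqP; cE => /=; field.
move=> [|[|[|?]]] [|[|[|?]]] //= _ _; apply: ceqP; rewrite /eps /fR1 /mkf /=; cE => /=; by field.
Qed.
Definition fR1n := mkf (Complex (0) (0)) (Complex (1) (0)) (Complex (0) (0)) (Complex (-1) (0)) (Complex (0) (0)) (Complex (0) (0)) (Complex (0) (0)) (Complex (0) (0)) (Complex (1) (0)).
Lemma SU_R1n : SU21 (\matrix_(i < 3, j < 3) fR1n i j).
Proof.
apply: SU21f.
  by rewrite /fR1n /mkf; apply: ceqP; cE => /=; field.
move=> [|[|[|?]]] [|[|[|?]]] //= _ _; apply: ceqP; rewrite /eps /fR1n /mkf /=; cE => /=; by field.
Qed.
Definition fU1 := mkf (Complex (0) (0)) (Complex (0) (1)) (Complex (0) (0)) (Complex (0) (1)) (Complex (0) (0)) (Complex (0) (0)) (Complex (0) (0)) (Complex (0) (0)) (Complex (1) (0)).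
Lemma SU_U1 : SU21 (\matrix_(i < 3, j < 3) fU1 i j).
Proof.
apply: SU21f.
  by rewrite /fU1 /mkf; apply: ceqP; cE => /=; field.
move=> [|[|[|?]]] [|[|[|?]]] //= _ _; apply: ceqP; rewrite /eps /fU1 /mkf /=; cE => /=; by field.
Qed.
Definition fU1n := mkf (Complex (0) (0)) (Complex (0) (-1)) (Complex (0) (0)) (Complex (0) (-1)) (Complex (0) (0)) (Complex (0) (0)) (Complex (0) (0)) (Complex (0) (0)) (Complex (1) (0)).
Lemma SU_U1n : SU21 (\matrix_(i < 3, j < 3) fU1n i j).
Proof.
apply: SU21f.
  by rewrite /fU1n /mkf; apply: ceqP; cE => /=; field.
move=> [|[|[|?]]] [|[|[|?]]] //= _ _; apply: ceqP; rewrite /eps /fU1n /mkf /=; cE => /=; by field.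
Qed.
Definition fN := mkf (Complex (5/4) (0)) (Complex (0) (0)) (Complex (3/4) (0)) (Complex (0) (0)) (Complex (1) (0)) (Complex (0) (0)) (Complex (3/4) (0)) (Complex (0) (0)) (Complex (5/4) (0)).
Lemma SU_N : SU21 (\matrix_(i < 3, j < 3) fN i j).
Proof.
apply: SU21f.
  by rewrite /fN /mkf; apply: ceqP; cE => /=; field.
move=> [|[|[|?]]] [|[|[|?]]] //= _ _; apply: ceqP; rewrite /eps /fN /mkf /=; cE => /=; by field.
Qed.
Definition fNn := mkf (Complex (5/4) (0)) (Complex (0) (0)) (Complex (-3/4) (0)) (Complex (0) (0)) (Complex (1) (0)) (Complex (0) (0)) (Complex (-3/4) (0)) (Complex (0) (0)) (Complex (5/4) (0)).
Lemma SU_Nn : SU21 (\matrix_(i < 3, j < 3) fNn i j).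
Proof.
apply: SU21f.
  by rewrite /fNn /mkf; apply: ceqP; cE => /=; field.
move=> [|[|[|?]]] [|[|[|?]]] //= _ _; apply: ceqP; rewrite /eps /fNn /mkf /=; cE => /=; by field.
Qed.
Definition fM := mkf (Complex (5/4) (0)) (Complex (0) (0)) (Complex (0) (3/4)) (Complex (0) (0)) (Complex (1) (0)) (Complex (0) (0)) (Complex (0) (-3/4)) (Complex (0) (0)) (Complex (5/4) (0)).
Lemma SU_M : SU21 (\matrix_(i < 3, j < 3) fM i j).
Proof.
apply: SU21f.
  by rewrite /fM /mkf; apply: ceqP; cE => /=; field.
move=> [|[|[|?]]] [|[|[|?]]] //= _ _; apply: ceqP; rewrite /eps /fM /mkf /=; cE => /=; by field.
Qed.
Definition fMn := mkf (Complex (5/4) (0)) (Complex (0) (0)) (Complex (0) (-3/4)) (Complex (0) (0)) (Complex (1) (0)) (Complex (0) (0)) (Complex (0) (3/4)) (Complex (0) (0)) (Complex (5/4) (0)).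
Lemma SU_Mn : SU21 (\matrix_(i < 3, j < 3) fMn i j).
Proof.
apply: SU21f.
  by rewrite /fMn /mkf; apply: ceqP; cE => /=; field.
move=> [|[|[|?]]] [|[|[|?]]] //= _ _; apply: ceqP; rewrite /eps /fMn /mkf /=; cE => /=; by field.
Qed.
Definition fP := mkf (Complex (1) (0)) (Complex (0) (0)) (Complex (0) (0)) (Complex (0) (0)) (Complex (5/4) (0)) (Complex (3/4) (0)) (Complex (0) (0)) (Complex (3/4) (0)) (Complex (5/4) (0)).
Lemma SU_P : SU21 (\matrix_(i < 3, j < 3) fP i j).
Proof.
apply: SU21f.
  by rewrite /fP /mkf; apply: ceqP; cE => /=; field.
move=> [|[|[|?]]] [|[|[|?]]] //= _ _; apply: ceqP; rewrite /eps /fP /mkf /=; cE => /=; by field.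
Qed.
Definition fPn := mkf (Complex (1) (0)) (Complex (0) (0)) (Complex (0) (0)) (Complex (0) (0)) (Complex (5/4) (0)) (Complex (-3/4) (0)) (Complex (0) (0)) (Complex (-3/4) (0)) (Complex (5/4) (0)).
Lemma SU_Pn : SU21 (\matrix_(i < 3, j < 3) fPn i j).
Proof.
apply: SU21f.
  by rewrite /fPn /mkf; apply: ceqP; cE => /=; field.
move=> [|[|[|?]]] [|[|[|?]]] //= _ _; apply: ceqP; rewrite /eps /fPn /mkf /=; cE => /=; by field.
Qed.
Definition fD1 := mkf (Complex (0) (1)) (Complex (0) (0)) (Complex (0) (0)) (Complex (0) (0)) (Complex (0) (-1)) (Complex (0) (0)) (Complex (0) (0)) (Complex (0) (0)) (Complex (1) (0)).
Lemma SU_D1 : SU21 (\matrix_(i < 3, j < 3) fD1 i j).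
Proof.
apply: SU21f.
  by rewrite /fD1 /mkf; apply: ceqP; cE => /=; field.
move=> [|[|[|?]]] [|[|[|?]]] //= _ _; apply: ceqP; rewrite /eps /fD1 /mkf /=; cE => /=; by field.
Qed.
Definition fD1n := mkf (Complex (0) (1)) (Complex (0) (0)) (Complex (0) (0)) (Complex (0) (0)) (Complex (0) (1)) (Complex (0) (0)) (Complex (0) (0)) (Complex (0) (0)) (Complex (-1) (0)).
Lemma SU_D1n : SU21 (\matrix_(i < 3, j < 3) fD1n i j).
Proof.
apply: SU21f.
  by rewrite /fD1n /mkf; apply: ceqP; cE => /=; field.
move=> [|[|[|?]]] [|[|[|?]]] //= _ _; apply: ceqP; rewrite /eps /fD1n /mkf /=; cE => /=; by field.
Qed.
End C.

Section Q.
Variable R : realType.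
Local Notation quat := (quat R).
Local Notation qm := (qmat R).
Definition o0 : 'I_3 := @Ordinal 3 0 isT.
Definition o1 : 'I_3 := @Ordinal 3 1 isT.
Definition o2 : 'I_3 := @Ordinal 3 2 isT.
Lemma enum3 : enum 'I_3 = [:: o0; o1; o2].
Proof. by apply: (inj_map val_inj); rewrite val_enum_ord. Qed.
Lemma ord3E (i : 'I_3) : [\/ i = o0, i = o1 | i = o2].
Proof.
case: i => [[|[|[|n]]] h]; [constructor 1|constructor 2|constructor 3|by []]; exact: val_inj.
Qed.

Definition qsum3 (h : 'I_3 -> quat) := qadd (h o0) (qadd (h o1) (h o2)).

Lemma quatP (p q : quat) : qre p = qre q -> qi p = qi q -> qj p = qj q -> qk p = qk q -> p = q.
Proof. by case: p q => a b c d [e f g h] /= -> -> -> ->. Qed.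

Ltac qsimp := cbn [qre qi qj qk qadd qzero qone qconj].

Lemma qmulDr (p q r : quat) : qmul p (qadd q r) = qadd (qmul p q) (qmul p r).
Proof. apply: quatP; rewrite /qmul; qsimp; ring. Qed.
Lemma qmulDl (p q r : quat) : qmul (qadd p q) r = qadd (qmul p r) (qmul q r).
Proof. apply: quatP; rewrite /qmul; qsimp; ring. Qed.
Lemma qmulA (p q r : quat) : qmul (qmul p q) r = qmul p (qmul q r).
Proof. apply: quatP; rewrite /qmul; qsimp; ring. Qed.
Lemma qadd0 (p : quat) : qadd p (qzero R) = p.
Proof. by apply: quatP; qsimp; rewrite addr0. Qed.

Lemma qmxmulE (A B : qm) i j : qmxmul A B i j = qsum3 (fun k => qmul (A i k) (B k j)).
Proof. by rewrite /qmxmul enum3 /= qadd0. Qed.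
Lemma qtraceE (A : qm) : qtrace A = qsum3 (fun k => A k k).
Proof. by rewrite /qtrace enum3 /= qadd0. Qed.

Lemma assoc3 (x : 'I_3 -> quat) (P Q : 'I_3 -> 'I_3 -> quat) (l : 'I_3) :
  qsum3 (fun m => qmul (qsum3 (fun k => qmul (x k) (P k m))) (Q m l))
  = qsum3 (fun k => qmul (x k) (qsum3 (fun m => qmul (P k m) (Q m l)))).
Proof.
rewrite /qsum3 !qmulDl !qmulDr !qmulA.
apply: quatP; qsimp; ring.
Qed.

Definition eR (k : 'I_3) : R := if val k == 2%N then -1 else 1.
Definition qsc (r : R) (q : quat) := Quat (r * qre q) (r * qi q) (r * qj q) (r * qk q).
Definition Lm (g : qm) : qm := fun l m => qsc (eR l * eR m) (qconj (g m l)).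
Definition qI : quat := Quat 0 1 0 0.


Lemma qscM a b p q : qmul (qsc (a * b) p) q = qsc a (qmul p (qsc b q)).
Proof. apply: quatP; rewrite /qmul /qsc; qsimp; ring. Qed.
Lemma qscD a p q : qsc a (qadd p q) = qadd (qsc a p) (qsc a q).
Proof. apply: quatP; rewrite /qsc; qsimp; ring. Qed.

Lemma I21g (g : qm) m k : qmxmul (qI21 R) g m k = qsc (eR m) (g m k).
Proof.
rewrite qmxmulE /qsum3 /qI21 /eR.
case: (ord3E m) => ->; apply: quatP; rewrite /= /qmul /qsc; qsimp; ring.
Qed.

Lemma Lg_I (g : qm) : qmx_eq (qmxmul (qmx_adj g) (qmxmul (qI21 R) g)) (qI21 R) ->
  forall l k, qmxmul (Lm g) g l k = qmx1 R l k.
Proof.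
move=> h l k; have := h l k.
rewrite !qmxmulE /qsum3 !I21g /Lm !qscM -!qscD -/(qsum3 _) => ->.
rewrite /qI21 /qmx1 /eR; case: (ord3E l) => ->; case: (ord3E k) => ->;
  apply: quatP; rewrite /= /qsc; qsimp; ring.
Qed.

Lemma qsum3_ext (h1 h2 : 'I_3 -> quat) : (forall k, h1 k = h2 k) -> qsum3 h1 = qsum3 h2.
Proof. by move=> e; rewrite /qsum3 !e. Qed.

Lemma sum_deltaR (x : 'I_3 -> quat) (l : 'I_3) :
  qsum3 (fun k => qmul (x k) (qmx1 R k l)) = x l.
Proof.
rewrite /qsum3 /qmx1; case: (ord3E l) => ->; case: (x _) => a b c d;
  apply: quatP; rewrite /= /qmul; qsimp; ring.
Qed.
Lemma sum_deltaL (x : 'I_3 -> quat) (l : 'I_3) :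
  qsum3 (fun k => qmul (qmx1 R l k) (x k)) = x l.
Proof.
rewrite /qsum3 /qmx1; case: (ord3E l) => ->; case: (x _) => a b c d;
  apply: quatP; rewrite /= /qmul; qsimp; ring.
Qed.

Lemma BL (g B : qm) : qmx_eq (qmxmul (qmx_adj g) (qmxmul (qI21 R) g)) (qI21 R) ->
  qmx_eq (qmxmul g B) (qmx1 R) -> forall l q, B l q = Lm g l q.
Proof.
move=> hsp hgB l q.
rewrite -(sum_deltaL (fun n => B n q) l).
have e : forall n, qmx1 R l n = qsum3 (fun m => qmul (Lm g l m) (g m n)).
  by move=> n; rewrite -(Lg_I hsp) qmxmulE.
have -> : qsum3 (fun n => qmul (qmx1 R l n) (B n q)) =
   qsum3 (fun n => qmul (qsum3 (fun m => qmul (Lm g l m) (g m n))) (B n q)).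
  by apply: qsum3_ext => n; rewrite e.
rewrite (assoc3 (Lm g l) g B).
have -> : qsum3 (fun k => qmul (Lm g l k) (qsum3 (fun m => qmul (g k m) (B m q)))) =
   qsum3 (fun k => qmul (Lm g l k) (qmx1 R k q)).
  by apply: qsum3_ext => k; rewrite -qmxmulE hgB.
exact: sum_deltaR.
Qed.

Lemma gL_I (g B : qm) : qmx_eq (qmxmul (qmx_adj g) (qmxmul (qI21 R) g)) (qI21 R) ->
  qmx_eq (qmxmul g B) (qmx1 R) -> qmx_eq (qmxmul g (Lm g)) (qmx1 R).
Proof.
move=> hsp hgB p q; rewrite qmxmulE.
have -> : qsum3 (fun k => qmul (g p k) (Lm g k q)) = qsum3 (fun k => qmul (g p k) (B k q)).
  by apply: qsum3_ext => k; rewrite (BL hsp hgB).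
rewrite -qmxmulE; exact: hgB.
Qed.

Definition Sx (g : qm) k l x := qsum3 (fun m => qmul (qmul (g m k) x) (Lm g l m)).
Definition S1 (g : qm) k l := qsum3 (fun m => qmul (g m k) (Lm g l m)).
Definition Si (g : qm) k l := qsum3 (fun m => qmul (qmul (g m k) qI) (Lm g l m)).

Lemma TrE (g X : qm) : qtrace (qmxmul g (qmxmul X (Lm g))) =
  qsum3 (fun k => qsum3 (fun l => Sx g k l (X k l))).
Proof.
rewrite qtraceE /qsum3 !qmxmulE /qsum3 !qmxmulE /qsum3 /Sx /qsum3 !qmulDr !qmulA.
apply: quatP; qsimp; ring.
Qed.

Lemma qmul_cplx p q a b : qmul (qmul p (Quat a b 0 0)) q =
  qadd (qsc a (qmul p q)) (qsc b (qmul (qmul p qI) q)).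
Proof. case: p q => [? ? ? ?] [? ? ? ?]; apply: quatP; unfold qmul, qsc, qI, qadd; cbn [qre qi qj qk]; ring. Qed.

Lemma Sx_lin g k l a b : Sx g k l (Quat a b 0 0) = qadd (qsc a (S1 g k l)) (qsc b (Si g k l)).
Proof.
rewrite /Sx /S1 /Si /qsum3 !(qmul_cplx _ _ a b); apply: quatP; rewrite /qsc; qsimp; ring.
Qed.

Lemma Tlin (g : qm) (f : nat -> nat -> R[i]) :
  qtrace (qmxmul g (qmxmul (qmat_of_cmx (\matrix_(i < 3, j < 3) f i j)) (Lm g))) =
  qsum3 (fun k => qsum3 (fun l =>
     qadd (qsc (complex.Re (f k l)) (S1 g k l)) (qsc (complex.Im (f k l)) (Si g k l)))).
Proof.
rewrite TrE; apply: qsum3_ext => k; apply: qsum3_ext => l.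
by rewrite /qmat_of_cmx mxE /quat_of_complex Sx_lin.
Qed.

Lemma qre_comm (p q : quat) : qre (qmul p q) = qre (qmul q p).
Proof. rewrite /qmul /=; ring. Qed.
Lemma qre_I (p q : quat) : qre (qmul (qmul p qI) q) = - qi (qmul q p).
Proof. case: p q => [? ? ? ?] [? ? ? ?]; unfold qmul, qI; cbn [qre qi qj qk]; ring. Qed.

Lemma reS1 (g : qm) : qmx_eq (qmxmul (qmx_adj g) (qmxmul (qI21 R) g)) (qI21 R) ->
  forall k l, qre (S1 g k l) = if l == k then 1 else 0.
Proof.
move=> hsp k l.
have : qre (qmxmul (Lm g) g l k) = qre (qmx1 R l k) by rewrite (Lg_I hsp).
rewrite qmxmulE /S1 /qsum3; qsimp.
rewrite (qre_comm (g o0 k)) (qre_comm (g o1 k)) (qre_comm (g o2 k)) => ->.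
by rewrite /qmx1; case: ifP.
Qed.

Lemma reSi (g : qm) : qmx_eq (qmxmul (qmx_adj g) (qmxmul (qI21 R) g)) (qI21 R) ->
  forall l, qre (Si g o0 l) = 0.
Proof.
move=> hsp l.
have : qi (qmxmul (Lm g) g l o0) = qi (qmx1 R l o0) by rewrite (Lg_I hsp).
rewrite qmxmulE /Si /qsum3; qsimp; rewrite !qre_I => e.
have h0 : qi (qmx1 R l o0) = 0 by rewrite /qmx1; case: ifP.
rewrite h0 in e; lra.
Qed.

Lemma eR0 : eR o0 = 1. Proof. by []. Qed.
Lemma eR1 : eR o1 = 1. Proof. by []. Qed.
Lemma eR2 : eR o2 = -1. Proof. by []. Qed.

Definition sumt (a0 a1 a2 b0 b1 b2 : quat) (d e0 e1 e2 : R) :=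
  qadd (qmul a0 (qsc (d * e0) (qconj b0)))
   (qadd (qmul a1 (qsc (d * e1) (qconj b1))) (qmul a2 (qsc (d * e2) (qconj b2)))).
Definition sumti (a0 a1 a2 b0 b1 b2 : quat) (d e0 e1 e2 : R) :=
  qadd (qmul (qmul a0 qI) (qsc (d * e0) (qconj b0)))
   (qadd (qmul (qmul a1 qI) (qsc (d * e1) (qconj b1))) (qmul (qmul a2 qI) (qsc (d * e2) (qconj b2)))).

Lemma mulI (p : quat) : qmul p qI = Quat (- qi p) (qre p) (qk p) (- qj p).
Proof. apply: quatP; rewrite /qmul /qI /=; ring. Qed.

Lemma G1 a0 a1 a2 b0 b1 b2 c d e0 e1 e2 : c = d ->
  sumt b0 b1 b2 a0 a1 a2 c e0 e1 e2 = qconj (sumt a0 a1 a2 b0 b1 b2 d e0 e1 e2).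
Proof.
move=> ->; case: a0 a1 a2 b0 b1 b2 => [? ? ? ?] [? ? ? ?] [? ? ? ?] [? ? ? ?] [? ? ? ?] [? ? ? ?].
apply: quatP; unfold sumt, qmul, qsc, qconj, qadd; cbn [qre qi qj qk]; ring.
Qed.
Lemma G2 a0 a1 a2 b0 b1 b2 c d e0 e1 e2 : c = - d ->
  sumt b0 b1 b2 a0 a1 a2 c e0 e1 e2 = qsc (-1) (qconj (sumt a0 a1 a2 b0 b1 b2 d e0 e1 e2)).
Proof.
move=> ->; case: a0 a1 a2 b0 b1 b2 => [? ? ? ?] [? ? ? ?] [? ? ? ?] [? ? ? ?] [? ? ? ?] [? ? ? ?].
apply: quatP; unfold sumt, qmul, qsc, qconj, qadd; cbn [qre qi qj qk]; ring.
Qed.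
Lemma G3 a0 a1 a2 b0 b1 b2 c d e0 e1 e2 : c = d ->
  sumti b0 b1 b2 a0 a1 a2 c e0 e1 e2 = qsc (-1) (qconj (sumti a0 a1 a2 b0 b1 b2 d e0 e1 e2)).
Proof.
move=> ->; case: a0 a1 a2 b0 b1 b2 => [? ? ? ?] [? ? ? ?] [? ? ? ?] [? ? ? ?] [? ? ? ?] [? ? ? ?].
rewrite /sumti !mulI; apply: quatP; unfold qmul, qsc, qconj, qadd; cbn [qre qi qj qk]; ring.
Qed.
Lemma G4 a0 a1 a2 b0 b1 b2 c d e0 e1 e2 : c = - d ->
  sumti b0 b1 b2 a0 a1 a2 c e0 e1 e2 = qconj (sumti a0 a1 a2 b0 b1 b2 d e0 e1 e2).
Proof.
move=> ->; case: a0 a1 a2 b0 b1 b2 => [? ? ? ?] [? ? ? ?] [? ? ? ?] [? ? ? ?] [? ? ? ?] [? ? ? ?].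
rewrite /sumti !mulI; apply: quatP; unfold qmul, qsc, qconj, qadd; cbn [qre qi qj qk]; ring.
Qed.

Lemma symS1_01 g : S1 g o1 o0 = qconj (S1 g o0 o1). Proof. by apply: G1. Qed.
Lemma symS1_02 g : S1 g o2 o0 = qsc (-1) (qconj (S1 g o0 o2)). Proof. by apply: G2; rewrite eR0 eR2 opprK. Qed.
Lemma symS1_12 g : S1 g o2 o1 = qsc (-1) (qconj (S1 g o1 o2)). Proof. by apply: G2; rewrite eR1 eR2 opprK. Qed.
Lemma symSi_01 g : Si g o1 o0 = qsc (-1) (qconj (Si g o0 o1)). Proof. by apply: G3. Qed.
Lemma symSi_02 g : Si g o2 o0 = qconj (Si g o0 o2). Proof. by apply: G4; rewrite eR0 eR2 opprK. Qed.
Lemma symS1_00 g : S1 g o0 o0 = qconj (S1 g o0 o0). Proof. by apply: G1. Qed.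
Lemma symS1_11 g : S1 g o1 o1 = qconj (S1 g o1 o1). Proof. by apply: G1. Qed.
Lemma symS1_22 g : S1 g o2 o2 = qconj (S1 g o2 o2). Proof. by apply: G1. Qed.


Arguments S1 : simpl never.
Arguments Si : simpl never.
End Q.
Arguments S1 : simpl never.
Arguments Si : simpl never.

Section Q2.
Variable R : realType.
Local Notation quat := (quat R).
Local Notation qm := (qmat R).
Local Notation qI := (qI R).
Definition c0 : 'I_4 := @Ordinal 4 0 isT.
Definition c1 : 'I_4 := @Ordinal 4 1 isT.
Definition c2 : 'I_4 := @Ordinal 4 2 isT.
Definition c3 : 'I_4 := @Ordinal 4 3 isT.

Definition qcomp (c : 'I_4) (q : quat) : R :=
  if val c == 0%N then qre q else if val c == 1%N then qi q
  else if val c == 2%N then qj q else qk q.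
Definition toq (u : 'M[R]_(3,4)) (m : 'I_3) : quat := Quat (u m c0) (u m c1) (u m c2) (u m c3).
Definition ofq (x : 'I_3 -> quat) : 'M[R]_(3,4) := \matrix_(m, c) qcomp c (x m).

Lemma ord4E (c : 'I_4) : [\/ c = c0, c = c1, c = c2 | c = c3].
Proof.
case: c => [[|[|[|[|n]]]] h].
- by constructor 1; apply: val_inj.
- by constructor 2; apply: val_inj.
- by constructor 3; apply: val_inj.
- by constructor 4; apply: val_inj.
- by [].
Qed.

Lemma toqK x : toq (ofq x) =1 x.
Proof. by move=> m; rewrite /toq !mxE /qcomp /=; case: (x m). Qed.

Lemma ofqK u : ofq (toq u) = u.
Proof. by apply/matrixP => m c; rewrite mxE; case: (ord4E c) => ->. Qed.


Lemma qcomp0 q : qcomp c0 q = qre q. Proof. by []. Qed.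
Lemma qcomp1 q : qcomp c1 q = qi q. Proof. by []. Qed.
Lemma qcomp2 q : qcomp c2 q = qj q. Proof. by []. Qed.
Lemma qcomp3 q : qcomp c3 q = qk q. Proof. by []. Qed.

Definition linM (Q : 'I_3 -> 'I_3 -> quat) (u : 'M[R]_(3,4)) : 'M[R]_(3,4) :=
  ofq (fun l => qsum3 (fun m => qmul (toq u m) (Q m l))).

Lemma fM_lin Q : linear (linM Q).
Proof.
move=> a u v; apply/matrixP => m c.
rewrite /linM /ofq /qsum3 /toq !mxE.
by case: (ord4E c) => ->; rewrite ?(qcomp0, qcomp1, qcomp2, qcomp3) /qmul /qadd /=; ring.
Qed.

HB.instance Definition _ Q := GRing.isLinear.Build R _ _ _ (linM Q) (fM_lin Q).




Lemma ofq_ext x y : x =1 y -> ofq x = ofq y.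
Proof. by move=> e; apply/matrixP => m c; rewrite !mxE e. Qed.

Lemma ofq0 : ofq (fun _ => qzero R) = 0.
Proof. by apply/matrixP => m c; rewrite !mxE; case: (ord4E c) => ->. Qed.



Lemma sum_delta (x : 'I_3 -> quat) (l : 'I_3) :
  qsum3 (fun k => qmul (x k) (if k == l then qone R else qzero R)) = x l.
Proof. exact: (sum_deltaR x l). Qed.

Lemma comp_id (P Q : 'I_3 -> 'I_3 -> quat) : (forall k l, qsum3 (fun m => qmul (P k m) (Q m l)) = if k == l then qone R else qzero R) ->
  forall u, linM Q (linM P u) = u.
Proof.
move=> hPQ u; rewrite -[RHS]ofqK /linM; apply: ofq_ext => l.
rewrite (@qsum3_ext _ _ (fun m : 'I_3 => qmul (qsum3 (fun k : 'I_3 => qmul (toq u k) (P k m))) (Q m l))); last first.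
  by move=> m; rewrite toqK.
rewrite assoc3 (@qsum3_ext _ _ (fun k : 'I_3 => qmul (toq u k) (if k == l then qone R else qzero R))).
  exact: sum_delta.
by move=> k; rewrite hPQ.
Qed.

Lemma linalg (P Q : 'I_3 -> 'I_3 -> quat) : (forall k l, qsum3 (fun m => qmul (P k m) (Q m l)) = if k == l then qone R else qzero R) ->
  forall a : 'I_3 -> quat, (forall l, qsum3 (fun m => qmul (a m) (Q m l)) = qzero R) ->
  forall m, a m = qzero R.
Proof.
move=> hPQ a ha m.
have h1 : lin_mx (linM P) *m lin_mx (linM Q) = 1%:M.
  apply/row_matrixP => i; rewrite !rowE mulmx1 mulmxA.
  by rewrite -[delta_mx 0 i]vec_mxK (mul_vec_lin (linM P)) (mul_vec_lin (linM Q)); congr mxvec; exact: comp_id.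
have h2 := mulmx1C h1.
have h3 u : linM P (linM Q u) = u.
  apply: (can_inj mxvecK).
  transitivity (mxvec u *m lin_mx (linM Q) *m lin_mx (linM P)).
    by rewrite (mul_vec_lin (linM Q)) (mul_vec_lin (linM P)).
  by rewrite -mulmxA h2 mulmx1.
have h4 : linM Q (ofq a) = 0.
  rewrite -ofq0 /linM; apply: ofq_ext => l; rewrite /qsum3 !toqK; exact: ha.
have e := h3 (ofq a); rewrite h4 linear0 in e.
by rewrite -(toqK a m) -e -ofq0 toqK.
Qed.

Lemma inconj (g B : qm) (f : nat -> nat -> R[i]) :
  qmx_eq (qmxmul (qmx_adj g) (qmxmul (qI21 R) g)) (qI21 R) ->
  qmx_eq (qmxmul g B) (qmx1 R) -> SU21 (\matrix_(i < 3, j < 3) f i j) ->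
  qconj_set g (@SU21_in_Sp21 R) (qmxmul g (qmxmul (qmat_of_cmx (\matrix_(i < 3, j < 3) f i j)) (Lm g))).
Proof.
move=> hsp hgB hsu.
exists (qmat_of_cmx (\matrix_(i < 3, j < 3) f i j)), (Lm g).
split; first by exists (\matrix_(i < 3, j < 3) f i j).
split; first exact: (gL_I hsp hgB).
split; last by [].
by move=> l k; rewrite (Lg_I hsp).
Qed.

Lemma qmulI0 (q : quat) : qmul q qI = qzero R -> q = qzero R.
Proof.
case: q => a b c d e.
move: (congr1 (@qre R) e) (congr1 (@qi R) e) (congr1 (@qj R) e) (congr1 (@qk R) e).
rewrite /qmul /qI /=.
move=> e1 e2 e3 e4; apply: quatP => /=; lra.
Qed.

Lemma vo0 : nat_of_ord o0 = 0%N. Proof. by []. Qed.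
Lemma vo1 : nat_of_ord o1 = 1%N. Proof. by []. Qed.
Lemma vo2 : nat_of_ord o2 = 2%N. Proof. by []. Qed.
Arguments S1 : simpl never.
Arguments Si : simpl never.
End Q2.
Arguments S1 : simpl never.
Arguments Si : simpl never.

Ltac trf HT su a1 a2 a3 :=
  destruct (HT _ su) as [a1 [a2 a3]];
  rewrite Tlin /qsum3 ?vo0 ?vo1 ?vo2 in a1 a2 a3;
  cbn [qre qi qj qk qadd qsc mkf complex.Re complex.Im
       fR1 fR1n fU1 fU1n fN fNn fM fMn fP fPn fD1 fD1n] in a1, a2, a3.

Ltac qc e := move: (congr1 (@qre _) e) (congr1 (@qi _) e) (congr1 (@qj _) e) (congr1 (@qk _) e);
  cbn [qre qi qj qk qconj qsc qzero qone].

Theorem lemma4p7 (R : realType) (g : qmat R) :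
  Sp21 g ->
  ~ (forall A : qmat R, qconj_set g (@SU21_in_Sp21 R) A -> qreal (qtrace A)).
Proof.
move=> [[B [hgB hBg]] hsp] H.
have HT : forall f : nat -> nat -> R[i], SU21 (\matrix_(i < 3, j < 3) f i j) ->
   qreal (qtrace (qmxmul g (qmxmul (qmat_of_cmx (\matrix_(i < 3, j < 3) f i j)) (Lm g)))).
  by move=> f hsu; exact: (H _ (inconj hsp hgB hsu)).
have F01 : S1 g o0 o1 = qzero R.
  trf HT (SU_R1 R) a1 a2 a3; trf HT (SU_R1n R) b1 b2 b3.
  have r : qre (S1 g o0 o1) = 0 by rewrite (reS1 hsp).
  have s := symS1_01 g; qc s => s1 s2 s3 s4.
  apply: quatP; cbn [qre qi qj qk qzero]; lra.
have F10 : S1 g o1 o0 = qzero R.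
  by rewrite symS1_01 F01; apply: quatP; cbn [qre qi qj qk qzero qconj]; rewrite ?oppr0.
have F02 : S1 g o0 o2 = qzero R.
  trf HT (SU_N R) a1 a2 a3; trf HT (SU_Nn R) b1 b2 b3.
  have r : qre (S1 g o0 o2) = 0 by rewrite (reS1 hsp).
  have s := symS1_02 g; qc s => s1 s2 s3 s4.
  apply: quatP; cbn [qre qi qj qk qzero]; lra.
have F20 : S1 g o2 o0 = qzero R.
  by rewrite symS1_02 F02; apply: quatP; cbn [qre qi qj qk qzero qconj qsc]; rewrite ?oppr0 ?mulr0.
have F12 : S1 g o1 o2 = qzero R.
  trf HT (SU_P R) a1 a2 a3; trf HT (SU_Pn R) b1 b2 b3.
  have r : qre (S1 g o1 o2) = 0 by rewrite (reS1 hsp).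
  have s := symS1_12 g; qc s => s1 s2 s3 s4.
  apply: quatP; cbn [qre qi qj qk qzero]; lra.
have F21 : S1 g o2 o1 = qzero R.
  by rewrite symS1_12 F12; apply: quatP; cbn [qre qi qj qk qzero qconj qsc]; rewrite ?oppr0 ?mulr0.
have F00 : S1 g o0 o0 = qone R.
  have r : qre (S1 g o0 o0) = 1 by rewrite (reS1 hsp).
  have s := symS1_00 g; qc s => s1 s2 s3 s4.
  apply: quatP; cbn [qre qi qj qk qone]; lra.
have F11 : S1 g o1 o1 = qone R.
  have r : qre (S1 g o1 o1) = 1 by rewrite (reS1 hsp).
  have s := symS1_11 g; qc s => s1 s2 s3 s4.
  apply: quatP; cbn [qre qi qj qk qone]; lra.
have F22 : S1 g o2 o2 = qone R.
  have r : qre (S1 g o2 o2) = 1 by rewrite (reS1 hsp).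
  have s := symS1_22 g; qc s => s1 s2 s3 s4.
  apply: quatP; cbn [qre qi qj qk qone]; lra.
have G0 : Si g o0 o0 = qzero R.
  trf HT (SU_D1 R) a1 a2 a3; trf HT (SU_D1n R) b1 b2 b3.
  have r := reSi hsp o0.
  apply: quatP; cbn [qre qi qj qk qzero]; lra.
have G1 : Si g o0 o1 = qzero R.
  trf HT (SU_U1 R) a1 a2 a3; trf HT (SU_U1n R) b1 b2 b3.
  have r := reSi hsp o1.
  have s := symSi_01 g; qc s => s1 s2 s3 s4.
  apply: quatP; cbn [qre qi qj qk qzero]; lra.
have G2 : Si g o0 o2 = qzero R.
  trf HT (SU_M R) a1 a2 a3; trf HT (SU_Mn R) b1 b2 b3.
  have r := reSi hsp o2.
  have s := symSi_02 g; qc s => s1 s2 s3 s4.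
  apply: quatP; cbn [qre qi qj qk qzero]; lra.
have F1 : forall k l, qsum3 (fun m => qmul ((fun k m => g m k) k m) ((fun m l => Lm g l m) m l))
    = if k == l then qone R else qzero R.
  move=> k l; rewrite -/(S1 g k l).
  by case: (ord3E k) => ->; case: (ord3E l) => ->;
    rewrite ?F00 ?F01 ?F02 ?F10 ?F11 ?F12 ?F20 ?F21 ?F22.
have F2 : forall l, qsum3 (fun m => qmul ((fun m => qmul (g m o0) (qI R)) m) ((fun m l => Lm g l m) m l))
    = qzero R.
  move=> l; rewrite -/(Si g o0 l).
  by case: (ord3E l) => ->; rewrite ?G0 ?G1 ?G2.
have hz := linalg F1 F2.
have hg0 : forall m, g m o0 = qzero R.
  move=> m; apply: qmulI0; exact: (hz m).
have := Lg_I hsp o0 o0; rewrite qmxmulE /qsum3 !hg0.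
move/(congr1 (@qre R)); rewrite /qmul /qadd /qmx1 /=; lra.
Qed.
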